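(* Let $P$ be a 6-stack and let $Q$ be a retract of $P$ that is a 4-tower. Then $P(0)\cap Q(0)\neq\emptyset$, where $Q(0)$ is the set of minimal elements of $Q$.
   Context: All posets are finite. For a poset $P$ and $p\in P$, the rank $r(p)$ of $p$ is the largest $m$ such that there is a chain $p_0<\dots<p_m=p$ in $P$. $P$ is ranked of rank $r(P)$ if every maximal chain has exactly $r(P)+1$ elements. For $0\le i\le j$, $P(i,j)=\{p\in P:i\le r(p)\le j\}$, $P(i)=P(i,i)$ (induced order). A subset $Q\subseteq P$ (induced order) is a retract of $P$ if there is an order-preserving $f:P\to Q$ with $f(q)=q$ for all $q\in Q$. The 6-crown $C_6$ is the poset on $\{x_0,x_1,x_2,y_0,y_1,y_2\}$ whose only strict comparabilities are $x_0<y_0>x_1<y_1>x_2<y_2>x_0$. A 6-stack is a ranked poset $P$ of rank $n\ge1$ such that $P(i,i+1)\cong C_6$ for each $0\le i<n$. The ordinal sum of posets $P_1,\dots,P_k$ ($k\ge1$) is their disjoint union ordered by the orders of the $P_i$ together with $p<q$ whenever $p\in P_i,q\in P_j,i<j$. A 4-tower is an ordinal sum of one or more two-element antichains. *)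

(* Defs.v *)
From mathcomp Require Import all_boot all_order.
Set Implicit Arguments. Unset Strict Implicit. Unset Printing Implicit Defensive.
Import Order.TTheory.
Local Open Scope order_scope.

Section PosetDefs.
Context {disp : Order.disp_t} {T : finPOrderType disp}.

Definition has_chain (A : {set T}) (p : T) (m : nat) : bool :=
  [exists s : (m.+1).-tuple T,
     [&& all (fun x => x \in A) s, sorted <%O (s : seq T) & last p s == p]].

(* rank of p in the induced subposet A: the largest such m
   (strict chains have at most #|T| elements, so m < #|T|). *)
Definition rank_in (A : {set T}) (p : T) : nat :=
  \max_(m < #|T|) (if has_chain A p m then nat_of_ord m else 0%N).

Definition rank (p : T) : nat := rank_in setT p.

Definition rank_band (i j : nat) : {set T} :=
  [set p | (i <= rank p)%N && (rank p <= j)%N].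
Definition level (i : nat) : {set T} := rank_band i i.

(* Q(0) for a subset Q with the induced order: elements of rank 0 in Q,
   i.e. the minimal elements of Q. *)
Definition level0_in (Q : {set T}) : {set T} :=
  [set q in Q | rank_in Q q == 0%N].

Definition is_chain (C : {set T}) : Prop :=
  forall x y, x \in C -> y \in C -> (x <= y) || (y <= x).

Definition maximal_chain (C : {set T}) : Prop :=
  is_chain C /\ forall D : {set T}, is_chain D -> C \subset D -> D = C.

Definition ranked_of_rank (r : nat) : Prop :=
  forall C : {set T}, maximal_chain C -> #|C| = r.+1.

Definition iso_onto (U : finType) (leU : rel U) (S : {set T}) : Prop :=
  exists f : U -> T,
    [/\ injective f, (forall p, p \in S <-> exists u, f u = p)
      & forall u v, (f u <= f v) = leU u v].

End PosetDefs.

(* The 6-crown on 'I_6: 0,1,2 = x_0,x_1,x_2 and 3,4,5 = y_0,y_1,y_2, with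
   x_0<y_0>x_1<y_1>x_2<y_2>x_0, i.e. x_i < y_i and x_i < y_{i-1 mod 3}. *)
Definition crown6_le (a b : 'I_6) : bool :=
  (a == b) ||
  [&& (a < 3)%N, (3 <= b)%N &
      ((b - 3 == a)%N || (b - 3 == (a + 2) %% 3)%N)].

(* Ordinal sum of k two-element antichains, on 'I_k * bool:
   (i,b) <= (j,c) iff (i,b) = (j,c) or i < j. *)
Definition tower_le (k : nat) (u v : 'I_k * bool) : bool :=
  (u == v) || (u.1 < v.1)%N.

Section Stacks.
Context {disp : Order.disp_t} {T : finPOrderType disp}.
Local Open Scope order_scope.

Definition six_stack : Prop :=
  exists n : nat, (1 <= n)%N /\ @ranked_of_rank _ T n /\
    forall i, (i < n)%N -> iso_onto crown6_le (@rank_band _ T i i.+1).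

Definition four_tower (Q : {set T}) : Prop :=
  exists k : nat, (1 <= k)%N /\ iso_onto (@tower_le k) Q.

Definition retract (Q : {set T}) : Prop :=
  exists f : T -> T,
    [/\ forall x y, x <= y -> f x <= f y,
        forall x, f x \in Q
      & forall q, q \in Q -> f q = q].

End Stacks.

(* Main.v *)
Require Import Defs.
From mathcomp Require Import all_boot all_order.
Set Implicit Arguments. Unset Strict Implicit. Unset Printing Implicit Defensive.
Import Order.TTheory.

Section Aux.
Context {disp : Order.disp_t} {T : finPOrderType disp}.
Local Open Scope order_scope.

Lemma sorted_rcons_l (e : rel T) s y : sorted e (rcons s y) -> sorted e s.
Proof. by case: s => [//|x s] /=; rewrite rcons_path => /andP[]. Qed.

Lemma sorted_rcons2 (e : rel T) s x y : sorted e (rcons (rcons s x) y) -> e x y.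
Proof. by case: s => [|z s] /=; rewrite ?rcons_path ?last_rcons => /andP[]. Qed.

Lemma has_chainP (A : {set T}) p m :
  reflect (exists s : seq T, [/\ size s = m.+1, all (fun x => x \in A) s,
             sorted <%O s & last p s = p]) (has_chain A p m).
Proof.
apply: (iffP existsP) => [[s /and3P[H1 H2 /eqP H3]]|[s [Hs H1 H2 H3]]].
  by exists (val s); split => //; exact: size_tuple.
have Hs' : size s == m.+1 by apply/eqP.
by exists (Tuple Hs'); apply/and3P; split => //=; apply/eqP.
Qed.

Lemma chain_step (A : {set T}) p m : has_chain A p m.+1 ->
  exists q, [/\ q \in A, q < p & has_chain A q m].
Proof.
move/has_chainP=> [s [Hs Hall Hsort Hlast]].
move: Hs Hall Hsort Hlast; case/lastP: s => [//|t z].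
rewrite size_rcons last_rcons => -[Ht] Hall Hsort Hz; subst z.
move: Ht Hall Hsort; case/lastP: t => [//|t q].
rewrite size_rcons => -[Ht]; rewrite !all_rcons => /and3P[Hp Hq Hall] Hsort.
exists q; split => //; first exact: sorted_rcons2 Hsort.
apply/has_chainP; exists (rcons t q); split.
- by rewrite size_rcons Ht.
- by rewrite all_rcons Hq.
- exact: sorted_rcons_l Hsort.
- by rewrite last_rcons.
Qed.

Lemma rank0 (A : {set T}) p : (forall q, q \in A -> ~~ (q < p)) -> rank_in A p = 0%N.
Proof.
move=> H; apply/eqP; rewrite -leqn0; apply/bigmax_leqP => m _.
case: m => [[|m] Hm] //=; case Hc: has_chain => //.
by case: (chain_step Hc) => q [qA qp _]; move: (H q qA); rewrite qp.
Qed.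

Lemma rank_ge1 (A : {set T}) p : (1 <= rank_in A p)%N -> exists q, q \in A /\ q < p.
Proof.
move=> H; case: (boolP [exists q, (q \in A) && (q < p)]).
  by case/existsP => q /andP[]; exists q.
move/existsPn => Hn; rewrite rank0 // in H => q qA.
by move: (Hn q); rewrite qA.
Qed.

Lemma rank_ge2 (A : {set T}) p : (2 <= rank_in A p)%N ->
  exists q r, [/\ q \in A, r \in A, q < r & r < p].
Proof.
move=> H; case: (boolP [exists q, exists r, [&& q \in A, r \in A, q < r & r < p]]).
  by case/existsP => q /existsP[r /and4P[]]; exists q, r.
move=> Hn; suff : (rank_in A p <= 1)%N by rewrite leqNgt H.
apply/bigmax_leqP => m _.
case: m => [[|[|m]] Hm] //=; case Hc: has_chain => //.
case: (chain_step Hc) => r [rA rp /chain_step [q [qA qr _]]].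
by move: Hn; rewrite negb_exists => /forallP/(_ q); rewrite negb_exists =>
  /forallP/(_ r); rewrite qA rA qr rp.
Qed.

Lemma rank_le1 (p q : T) : q < p -> (1 <= rank p)%N.
Proof.
move=> qp.
have HT : (1 < #|T|)%N.
  rewrite (cardD1 p) (cardD1 q) !inE (lt_eqF qp) //.
have Hc : has_chain setT p 1.
  apply/has_chainP; exists [:: q; p]; split => //=; rewrite ?inE ?qp //.
by apply: (leq_trans _ (leq_bigmax (Ordinal HT))); rewrite /= Hc.
Qed.

Lemma rank_le2 (p q r : T) : q < r -> r < p -> (2 <= rank p)%N.
Proof.
move=> qr rp.
have qp := lt_trans qr rp.
have HT : (2 < #|T|)%N.
  rewrite (cardD1 p) (cardD1 q) (cardD1 r) !inE (lt_eqF qp) (gt_eqF qr) (lt_eqF rp) //.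
have Hc : has_chain setT p 2.
  apply/has_chainP; exists [:: q; r; p]; split => //=; rewrite ?inE ?qr ?rp //.
by apply: (leq_trans _ (leq_bigmax (Ordinal HT))); rewrite /= Hc.
Qed.

End Aux.

Lemma crown_meet (ua ub : 'I_6) : (3 <= ua)%N -> (3 <= ub)%N ->
  exists w : 'I_6, crown6_le w ua && crown6_le w ub.
Proof.
case: ua => [[|[|[|[|[|[|//]]]]]] Hu]; case: ub => [[|[|[|[|[|[|//]]]]]] Hv] //= _ _;
first [ by exists (@Ordinal 6 0 isT) | by exists (@Ordinal 6 1 isT)
      | by exists (@Ordinal 6 2 isT) ].
Qed.

Local Open Scope order_scope.

Theorem lemma5p6 (disp : Order.disp_t) (T : finPOrderType disp) (Q : {set T}) :
  six_stack (T := T) -> retract Q -> four_tower Q ->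
  level 0 :&: level0_in Q != set0.
Proof.
move=> [n [n1 [_ Hband]]] [g [gmono gQ gid]] [k [k1 [h [hinj hQ hle]]]].
case: (Hband 0%N n1) => c [cinj cimg cle].
case: k k1 h hinj hQ hle => [//|k] _ h hinj hQ hle.
have Hmin : forall z w : 'I_k.+1 * bool, w.1 = ord0 -> h z <= h w -> z = w.
  by move=> z w Hw; rewrite hle /tower_le Hw ltn0 orbF => /eqP.
have HL : forall w : 'I_k.+1 * bool, w.1 = ord0 -> h w \in level0_in Q.
  move=> w Hw; rewrite inE; apply/andP; split; first by apply/hQ; exists w.
  apply/eqP; apply: rank0 => q /hQ [z <-]; rewrite lt_def; apply/negP => /andP[ne].
  by move/(Hmin _ _ Hw) => E; move: ne; rewrite E eqxx.
have HQ : forall w, h w \in Q by move=> w; apply/hQ; exists w.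
have Hy : forall a0 : T, (1 <= rank a0)%N -> exists u : 'I_6, (3 <= u)%N /\ c u <= a0.
  move=> a0 Ha.
  pose S := [pred y | (y <= a0)%O && (1 <= rank y)%N].
  have Sa : S a0 by rewrite /S /= lexx Ha.
  case: (arg_minnP (fun y => #|[set z | z < y]|) Sa) => y /andP[ya Hy1] Hm.
  have Hy : rank y = 1%N.
    apply/eqP; rewrite eqn_leq Hy1 andbT leqNgt; apply/negP => /rank_ge2 [q [r [_ _ qr ry]]].
    have : (#|[set z | (z < r)%O]| < #|[set z | (z < y)%O]|)%N.
      apply: proper_card; apply/properP; split.
        apply/subsetP => z; rewrite !inE => zr; exact: lt_trans zr ry.
      by exists r; rewrite !inE ?ry ?ltxx.
    rewrite ltnNge Hm //= (rank_le1 qr) andbT; exact: le_trans (ltW ry) ya.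
  case: (@rank_ge1 _ _ setT y) => [|q [_ qy]]; first by rewrite -/(rank y) Hy.
  have Hq : rank q = 0%N.
    apply/eqP; rewrite -leqn0 leqNgt; apply/negP => /rank_ge1 [q' [_ q'q]].
    by have := rank_le2 q'q qy; rewrite Hy.
  have yB : y \in rank_band 0 1 by rewrite inE Hy.
  have qB : q \in rank_band 0 1 by rewrite inE Hq.
  case/cimg: yB => u yu; case/cimg: qB => v qv.
  exists u; split; last by rewrite yu.
  move: qy; rewrite -yu -qv lt_def cle => /andP[neq].
  rewrite /crown6_le => /orP[/eqP E|/and3P[_ -> _]] //.
  by move: neq; rewrite E eqxx.
set a := h (ord0, false); set b := h (ord0, true).
have aL : a \in level0_in Q by apply: HL.
have bL : b \in level0_in Q by apply: HL.
apply/set0Pn.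
case: (boolP (a \in level 0)) => Ha0; first by exists a; rewrite inE Ha0 aL.
case: (boolP (b \in level 0)) => Hb0; first by exists b; rewrite inE Hb0 bL.
exfalso.
have rk : forall x : T, x \notin level 0 -> (1 <= rank x)%N.
  by move=> x; rewrite inE /= leqn0 lt0n.
have [ua [ua3 uaa]] := Hy a (rk _ Ha0).
have [ub [ub3 ubb]] := Hy b (rk _ Hb0).
have [w /andP[wa wb]] := crown_meet ua3 ub3.
have xa : c w <= a by apply: le_trans uaa; rewrite cle.
have xb : c w <= b by apply: le_trans ubb; rewrite cle.
have gxa : g (c w) <= a by rewrite -(gid a (HQ _)); apply: gmono.
have gxb : g (c w) <= b by rewrite -(gid b (HQ _)); apply: gmono.
case/hQ: (gQ (c w)) => z Hz; rewrite -Hz in gxa gxb.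
have E1 := Hmin _ (ord0, false) erefl gxa; have E2 := Hmin _ (ord0, true) erefl gxb.
by move: E2; rewrite E1.
Qed.
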